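(* For every integer $n\ge 2$, let $a_o$ (resp. $a_e$) be the total number of odd (resp. even) parts, counted with multiplicity, over all partitions in $\mathcal{H}_n$. Then $$a_o=(n+2)\cdot 2^{n-3}\qquad\text{and}\qquad a_e=n\cdot 2^{n-3}.$$
   Context: A partition is a finite nonempty weakly decreasing sequence $\lambda=(\lambda_1,\ldots,\lambda_k)$ of positive integers; $\ell(\lambda)=k$. The perimeter is $\Gamma(\lambda)=\lambda_1+\ell(\lambda)-1$; $\mathcal{H}_n$ is the set of partitions with perimeter $n$. *)

(* Defs.v *)
From mathcomp Require Import all_boot.
Set Implicit Arguments. Unset Strict Implicit. Unset Printing Implicit Defensive.

Definition is_partition (s : seq nat) : bool :=
  [&& s != [::], sorted geq s & all (fun x => 0 < x) s].

Definition perimeter (s : seq nat) : nat := head 0 s + size s - 1.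

Fixpoint seqs_len (m k : nat) : seq (seq nat) :=
  if k is k'.+1 then [seq x :: t | x <- iota 1 m, t <- seqs_len m k'] else [:: [::]].

Definition seqs_upto (m k : nat) : seq (seq nat) :=
  flatten [seq seqs_len m j | j <- iota 0 k.+1].

(* H_n: all partitions of perimeter n.  Any such partition has all parts <= n
   and length <= n, so it occurs (exactly once) in seqs_upto n n. *)
Definition H (n : nat) : seq (seq nat) :=
  [seq s <- seqs_upto n n | is_partition s && (perimeter s == n)].

Definition a_odd (n : nat) : nat := \sum_(s <- H n) count odd s.
Definition a_even (n : nat) : nat := \sum_(s <- H n) count (fun x => ~~ odd x) s.

(* Main.v *)
Require Import Defs.
From mathcomp Require Import all_boot zify.

Lemma mem_seqs_len m k s :
  (s \in seqs_len m k) = (size s == k) && all (fun x => 0 < x <= m) s.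
Proof.
elim: k s => [|k IH] [|a t] //.
- by apply/allpairsP => -[[x y] /= [_ _]].
- apply/allpairsP/idP => [[[x y] /= [Hx Hy [-> ->]]] | ].
    by move: Hx Hy; rewrite mem_iota IH eqSS => /andP[-> Hx] /andP[-> ->]; rewrite andbT; lia.
  rewrite eqSS => /and3P[Hs Ha Ht]; exists (a, t) => /=; split => //.
    by rewrite mem_iota; lia.
  by rewrite IH Hs.
Qed.

Lemma uniq_seqs_len m k : uniq (seqs_len m k).
Proof.
elim: k => [|k IH] //=.
apply: allpairs_uniq => //; first exact: iota_uniq.
by move=> [x y] [x' y'] _ _ /= [-> ->].
Qed.

Lemma seqs_uptoS m k : seqs_upto m k.+1 = seqs_upto m k ++ seqs_len m k.+1.
Proof.
by rewrite /seqs_upto -addn1 iotaD map_cat flatten_cat /= cats0.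
Qed.

Lemma mem_seqs_upto m k s :
  (s \in seqs_upto m k) = (size s <= k) && all (fun x => 0 < x <= m) s.
Proof.
elim: k => [|k IH].
  by rewrite /seqs_upto /=; case: s => [|a t]; rewrite inE.
rewrite seqs_uptoS mem_cat IH mem_seqs_len.
case: (all _ s); rewrite ?andbF ?andbT //; lia.
Qed.

Lemma uniq_seqs_upto m k : uniq (seqs_upto m k).
Proof.
elim: k => [|k IH].
  by [].
rewrite seqs_uptoS cat_uniq IH uniq_seqs_len andbT.
apply/hasPn => s; rewrite mem_seqs_len mem_seqs_upto => /andP[/eqP -> _].
by rewrite ltnn.
Qed.

Lemma part_head_max a t : is_partition (a :: t) -> all (fun x => x <= a) t.
Proof.
case/and3P => _ Hs _; have := order_path_min (leT := geq) _ Hs.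
by apply => x y z /= H1 H2; apply: leq_trans H2 H1.
Qed.

Lemma mem_H n s : (s \in H n) = is_partition s && (perimeter s == n).
Proof.
rewrite mem_filter; case Hp: (is_partition s) => //=.
case: eqP => //= <-; rewrite mem_seqs_upto.
case: s Hp => [|a t] Hp //; have Hm := @part_head_max a t Hp.
case/and3P: Hp => _ _ /= /andP[Ha Ht].
rewrite /perimeter /=; apply/andP; split; first lia.
apply/andP; split; first lia.
apply/allP => x xt; move/allP: Ht => /(_ x xt) ->; move/allP: Hm => /(_ x xt) /=; lia.
Qed.

Lemma uniq_H n : uniq (H n).
Proof. exact/filter_uniq/uniq_seqs_upto. Qed.

Fixpoint G (k : nat) : seq (seq nat) :=
  if k is k'.+1 then [seq rcons s 1 | s <- G k'] ++ [seq map succn s | s <- G k']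
  else [:: [:: 1]].

Lemma sorted_last_min s x : sorted geq (rcons s x) -> all (fun y => x <= y) s.
Proof.
move=> H; have: sorted leq (rev (rcons s x)) by rewrite rev_sorted.
by rewrite rev_rcons /= => /(order_path_min leq_trans); rewrite all_rev.
Qed.

Lemma G_part k s : s \in G k -> is_partition s && (perimeter s == k.+1).
Proof.
elim: k s => [|k IH] s /=.
  by rewrite inE => /eqP ->.
rewrite mem_cat => /orP[/mapP[t Ht ->] | /mapP[t Ht ->]];
  have /andP[Hp /eqP Hper] := IH t Ht; case: t Hp Hper {Ht} => [|a t] Hp Hper; try by move: Hp.
all: move: (Hp); rewrite /is_partition /= => /andP[Hs Hpos].
- have Hl : 0 < last a t.
    by apply: (allP (Hpos : all (leq 1) (a::t))); exact: mem_last.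
  rewrite rcons_path all_rcons Hs /= Hl; move/andP: Hpos => [-> ->] /=.
  move: Hper; rewrite /perimeter /= size_rcons => Hper; apply/eqP; lia.
- rewrite path_map.
  rewrite (sub_path _ Hs) //= all_map.
  rewrite (_ : all _ _ = true); last by apply/allP.
  move: Hper; rewrite /perimeter /= size_map => Hper; apply/eqP; lia.
Qed.

Lemma G_uniq k : uniq (G k).
Proof.
elim: k => [|k IH] //=.
rewrite cat_uniq (map_inj_uniq (@rcons_injl _ 1)) IH (map_inj_uniq (inj_map succn_inj)) IH /= andbT.
apply/hasPn => s /mapP[t Ht ->]; apply/negP => /mapP[u Hu Heq].
have /andP[Hp _] := @G_part k t Ht.
have : 1 \in rcons u 1 by rewrite mem_rcons mem_head.
rewrite -Heq => /mapP[y Hy Hy1].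
move: Hp; rewrite /is_partition => /and3P[_ _ /allP /(_ y Hy)].
by case: y Hy1 {Hy}.
Qed.

Lemma part_G k s : is_partition s -> perimeter s == k.+1 -> s \in G k.
Proof.
elim: k s => [|k IH] s Hp Hper.
  case: s Hp Hper => [|a t] //; rewrite /is_partition /perimeter /= => /andP[_ /andP[Ha _]] Hper.
  have a1 : a = 1 by lia.
  have t0 : size t = 0 by lia.
  by case: t t0 Hper => // _ _; rewrite a1 inE.
rewrite /= mem_cat.
case/lastP: s Hp Hper => [|s' x] Hp Hper; first by [].
have /and3P[_ Hs Hpos] := Hp.
have Hmin := @sorted_last_min s' x Hs.
move: Hpos; rewrite all_rcons => /andP[Hx Hpos].
case x1: (x == 1).
  move/eqP: x1 => x1; subst x.
  apply/orP; left; apply/mapP; exists s' => //; apply: IH.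
    case: s' Hp Hper Hs Hpos {Hmin} => [|a t].
      by rewrite /perimeter.
    move=> _ _; rewrite rcons_cons /= rcons_path /is_partition /= => /andP[-> _] ->.
    by [].
  case: s' Hp Hper Hs Hpos {Hmin} => [|a t] //.
  by rewrite /perimeter rcons_cons /= size_rcons => _ /eqP Hper _ _; apply/eqP; lia.
apply/orP; right; apply/mapP; exists (map predn (rcons s' x)).
  have x2 : 2 <= x by move: x1 Hx; case: (x) => [|[|y]].
  have Hall : all (fun y => 2 <= y) (rcons s' x).
    rewrite all_rcons x2 /=; apply/allP => y Hy; move/allP: Hmin => /(_ y Hy); lia.
  apply: IH.
    rewrite /is_partition -size_eq0 size_map size_rcons /=.
    rewrite sorted_map all_map (sub_sorted _ Hs) /=; last by move=> a b /=; lia.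
    apply/allP => y Hy /=; move/allP: Hall => /(_ y Hy); lia.
  move: Hper Hall; case: s' {Hp Hs Hpos Hmin} => [|a t].
    by rewrite /perimeter /=; lia.
  rewrite rcons_cons /perimeter /= size_map size_rcons => /eqP Hper /andP[Ha _].
  apply/eqP; lia.
rewrite -map_comp map_id_in // => y; rewrite mem_rcons inE /= => /orP[/eqP -> | Hy].
  lia.
move/allP: Hmin => /(_ y Hy); lia.
Qed.

Definition O k := \sum_(s <- G k) count odd s.
Definition E k := \sum_(s <- G k) count (fun x => ~~ odd x) s.

Lemma size_G k : size (G k) = 2 ^ k.
Proof. by elim: k => [|k IH] //=; rewrite size_cat !size_map IH expnS mul2n addnn. Qed.

Lemma O_rec k : O k.+1 = O k + 2 ^ k + E k.
Proof.
rewrite /O /E /= big_cat !big_map /=.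
rewrite (eq_bigr (fun s => count odd s + 1)); last by move=> s _; rewrite -cats1 count_cat.
rewrite big_split /= sum1_size size_G.
congr (_ + _); apply: eq_bigr => s _; rewrite count_map; apply: eq_count => y /=.
by [].
Qed.

Lemma E_rec k : E k.+1 = E k + O k.
Proof.
rewrite /O /E /= big_cat !big_map /=.
rewrite (eq_bigr (fun s => count (fun x => ~~ odd x) s)); last by move=> s _; rewrite -cats1 count_cat /= ?addn0.
congr (_ + _); apply: eq_bigr => s _; rewrite count_map; apply: eq_count => y /=.
by rewrite negbK.
Qed.

Lemma OE_closed k : 8 * O k.+1 = (k + 4) * 2 ^ (k + 2) /\ 8 * E k.+1 = (k + 2) * 2 ^ (k + 2).
Proof.
elim: k => [|k [IH1 IH2]].
  by rewrite O_rec E_rec /O /E /=; rewrite !big_cons !big_nil.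
rewrite (O_rec k.+1) (E_rec k.+1) !mulnDr IH1 IH2.
have e1 : 2 ^ (k + 2) = 2 * 2 ^ (k + 1) by rewrite addnS expnS.
have e2 : 2 ^ (k.+1 + 2) = 4 * 2 ^ (k + 1) by rewrite addSn !addnS !expnS mulnA.
rewrite e1 e2 -(addn1 k); move: (2 ^ (k + 1)) => p; split; nia.
Qed.

Lemma perm_HG k : perm_eq (H k.+1) (G k).
Proof.
apply: uniq_perm; [exact: uniq_H | exact: G_uniq |] => s.
rewrite mem_H; apply/idP/idP => [/andP[Hp Hper] | Hs].
  exact: part_G.
exact: G_part.
Qed.

Theorem corollary2p6 (n : nat) : 2 <= n ->
  8 * a_odd n = (n + 2) * 2 ^ n /\ 8 * a_even n = n * 2 ^ n.
Proof.
case: n => [|[|k]] // _.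
have [H1 H2] := OE_closed k.
rewrite /a_odd /a_even !(perm_big _ (perm_HG k.+1)) -/(O k.+1) -/(E k.+1) H1 H2.
by rewrite addn2; split; congr (_ * _); lia.
Qed.
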